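(* Let $S_{\text{thirds}}=(1,\mathbb{R}^{+},\{-\tfrac13,0,\tfrac13\},f_{\text{add}},\{\bot\}\cup\mathbb{Z}^{+},h_{\text{sqz}},x_0=0)$ and $\widehat{S}_{\text{binary}}=(1,\mathbb{R}^{+},\{\pm\tfrac{1}{2^p}\mid p\in\mathbb{Z}\},f_{\text{add}},\{\bot\}\cup\mathbb{Z}^{+},h_{\text{sqz}},\widehat{x}_0=0)$, where $f_{\text{add}}(x,u)=x+u$ and $$h_{\text{sqz}}(x)=\begin{cases} q & \text{if there is } q\in\mathbb{Z}^{+} \text{ with } -\frac{1}{4\cdot 2^q}\le x-\frac{q}{3}\le\frac{1}{4\cdot 2^q},\\ \bot & \text{otherwise.}\end{cases}$$ Then $\widehat{S}_{\text{binary}}$ is a $1$-illusion of $S_{\text{thirds}}$.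
   Context: A deterministic multi-robot transition system is a 7-tuple $(n,X,U,f,Y,h,x_0)$: $n$ robots, product state space $X$, product action space $U$, transition function $f:X\times U\to X$ (componentwise per robot), product observation space $Y$, observation function $h:X\to Y$ (componentwise per robot, $h^{(i)}$), initial state $x_0$; it evolves by $x_{k+1}=f(x_k,u_k)$, $y_k=h(x_k)$. Here both systems have a single robot. When a primary system $\widehat{S}$ (hatted quantities) emulates a secondary system $S$, a robot policy $\widehat{\pi}^{(i)}$ for robot $i$ of $\widehat{S}$ maps its own action history $\widehat{u}^{(i)}_0,\dots,\widehat{u}^{(i)}_k$, its observation history $\widehat{y}^{(i)}_0,\dots,\widehat{y}^{(i)}_k$, and the state history $x_0,\dots,x_\ell$ of the secondary system (with $\ell$ possibly different from $k$) to an action $\widehat{u}^{(i)}_k$. Robot policies in $S$ choose actions from histories in the same manner. $\widehat{S}$ is an $m$-illusion of $S$ (with $0<m\le n$) if there exist (i) robot policies $\widehat{\pi}^{(1)},\dots,\widehat{\pi}^{(\widehat{n})}$ in $\widehat{S}$, (ii) a strictly increasing function $z:\mathbb{Z}^+\to\mathbb{Z}^+$, and (iii) functions $\rho_k:\{1,\dots,m\}\to\{1,\dots,\widehat{n}\}$, such that for any robot policies $\pi^{(1)},\dots,\pi^{(n)}$ in $S$, for all $k\ge0$ and $1\le i\le m$, $h^{(i)}(x_k)=\widehat{h}^{(\rho_k(i))}(\widehat{x}_{z(k)})$, where $x$ and $\widehat{x}$ are the state trajectories of $S$ and $\widehat{S}$. *)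

(* Defs.v *)
From Stdlib Require Import Reals Lra List ClassicalEpsilon.
Import ListNotations.
Open Scope R_scope.

(* A deterministic single-robot transition system (n = 1). *)
Record system := {
  St : Type;
  Act : Type;
  Obs : Type;
  trans : St -> Act -> St;
  obs : St -> Obs;
  init : St
}.

(* Policy of the (single) robot of the secondary system: previous actions
   u_0..u_{k-1} and observations y_0..y_k  |->  u_k. *)
Definition policy (Sy : system) := list (Act Sy) -> list (Obs Sy) -> Act Sy.

(* Policy of the robot of the primary system: its previous actions, its
   observations y^_0..y^_k, and the secondary state history x_0..x_l. *)
Definition ppolicy (P Sy : system) :=
  list (Act P) -> list (Obs P) -> list (St Sy) -> Act P.

Fixpoint sec_run (Sy : system) (pi : policy Sy) (k : nat) : list (Act Sy) * list (St Sy) :=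
  match k with
  | O => ([], [init Sy])
  | S k' => let (us, xs) := sec_run Sy pi k' in
            let x := last xs (init Sy) in
            let u := pi us (map (obs Sy) xs) in
            (us ++ [u], xs ++ [trans Sy x u])
  end.

Definition sec_state (Sy : system) (pi : policy Sy) (k : nat) : St Sy :=
  nth k (snd (sec_run Sy pi k)) (init Sy).

(* For z strictly increasing, ell z k = min { l | k < z l }: the index of the
   secondary state currently being emulated by the primary at its time k. *)
Definition ell (z : nat -> nat) (k : nat) : nat :=
  length (filter (fun l => Nat.leb (z l) k) (seq 0 (S k))).

Fixpoint prim_run (P Sy : system) (pih : ppolicy P Sy) (z : nat -> nat)
  (xsec : nat -> St Sy) (k : nat) : list (Act P) * list (St P) :=
  match k with
  | O => ([], [init P])
  | S k' => let (us, xs) := prim_run P Sy pih z xsec k' in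
            let x := last xs (init P) in
            let u := pih us (map (obs P) xs) (map xsec (seq 0 (S (ell z k')))) in
            (us ++ [u], xs ++ [trans P x u])
  end.

Definition prim_state (P Sy : system) (pih : ppolicy P Sy) (z : nat -> nat)
  (xsec : nat -> St Sy) (k : nat) : St P :=
  nth k (snd (prim_run P Sy pih z xsec k)) (init P).

Definition strictly_increasing (z : nat -> nat) : Prop :=
  forall a b : nat, (a < b)%nat -> (z a < z b)%nat.

(* m-illusion with m = n = n^ = 1 (so rho_k is the identity on {1}). *)
Definition one_illusion (P Q : system) (e : Obs P = Obs Q) : Prop :=
  exists (pih : ppolicy P Q) (z : nat -> nat),
    strictly_increasing z /\
    forall (pi : policy Q) (k : nat),
      obs Q (sec_state Q pi k) = eq_rect _ (fun T => T) (obs P (prim_state P Q pih z (sec_state Q pi) (z k))) _ e.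

(* h_sqz; None plays the role of bottom, Z^+ = {0,1,2,...}. *)
Definition sqz_prop (x : R) (q : nat) : Prop :=
  - (1 / (4 * 2 ^ q)) <= x - INR q / 3 <= 1 / (4 * 2 ^ q).

Definition h_sqz (x : R) : option nat :=
  match excluded_middle_informative (exists q : nat, sqz_prop x q) with
  | left H => Some (proj1_sig (constructive_indefinite_description _ H))
  | right _ => None
  end.

Definition thirds_act := { u : R | u = - (1/3) \/ u = 0 \/ u = 1/3 }.
Definition binary_act := { u : R | exists p : Z, u = / powerRZ 2 p \/ u = - / powerRZ 2 p }.

Definition f_add_thirds (x : R) (u : thirds_act) : R := x + proj1_sig u.
Definition f_add_binary (x : R) (u : binary_act) : R := x + proj1_sig u.

Definition S_thirds : system :=
  {| St := R; Act := thirds_act; Obs := option nat;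
     trans := f_add_thirds; obs := h_sqz; init := 0 |}.

Definition S_binary : system :=
  {| St := R; Act := binary_act; Obs := option nat;
     trans := f_add_binary; obs := h_sqz; init := 0 |}.

Definition obs_eq : Obs S_binary = Obs S_thirds := eq_refl.

(* Main.v *)
Require Import Defs.
From Stdlib Require Import Reals Lra Lia List ClassicalEpsilon.
Import ListNotations.
Open Scope R_scope.

Lemma ln2_pos : 0 < ln 2.
Proof. rewrite <- ln_1. apply ln_increasing; lra. Qed.

Lemma pow2_bracket : forall a, 0 < a -> exists p : Z, powerRZ 2 p <= a < 2 * powerRZ 2 p.
Proof.
  intros a Ha. set (x := ln a / ln 2).
  destruct (archimed x) as [H1 H2].
  exists (up x - 1)%Z.
  assert (L := ln2_pos).
  assert (E : 2 * powerRZ 2 (up x - 1) = Rpower 2 (IZR (up x))).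
  { rewrite powerRZ_Rpower by lra. rewrite minus_IZR. unfold Rpower.
    replace ((IZR (up x) - 1) * ln 2) with (IZR (up x) * ln 2 + - ln 2) by ring.
    rewrite exp_plus, exp_Ropp, exp_ln by lra. field. }
  rewrite E. rewrite powerRZ_Rpower by lra. rewrite minus_IZR. unfold Rpower.
  assert (Hx : ln a = x * ln 2) by (unfold x; field; lra).
  assert (Ha' : a = exp (x * ln 2)) by (rewrite <- Hx, exp_ln; lra).
  clearbody x. rewrite Ha'. split.
  - destruct (Rle_lt_or_eq_dec ((IZR (up x) - 1) * ln 2) (x * ln 2)).
    + apply Rmult_le_compat_r; lra.
    + left; apply exp_increasing; auto.
    + right; f_equal; auto.
  - apply exp_increasing. apply Rmult_lt_compat_r; lra.
Qed.

Lemma step_exists : forall r eta, 0 < eta ->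
  exists s : binary_act, Rabs (r - proj1_sig s) <= Rabs r / 2 + eta.
Proof.
  intros r eta He.
  assert (mk : forall p : Z, exists q : Z, powerRZ 2 p = / powerRZ 2 q /\ - powerRZ 2 p = - / powerRZ 2 q).
  { intros p. exists (- p)%Z. rewrite powerRZ_neg', Rinv_inv. split; reflexivity. }
  destruct (Rtotal_order r 0) as [Hr|[Hr|Hr]].
  - destruct (pow2_bracket (- r)) as [p Hp]; [lra|].
    destruct (mk p) as [q [_ Hq]].
    exists (exist _ (- powerRZ 2 p) (ex_intro _ q (or_intror Hq))). simpl.
    rewrite (Rabs_left r) by lra. unfold Rabs. destruct (Rcase_abs _); lra.
  - destruct (pow2_bracket eta) as [p Hp]; [lra|].
    destruct (mk p) as [q [Hq _]].
    exists (exist _ (powerRZ 2 p) (ex_intro _ q (or_introl Hq))). simpl.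
    subst r. rewrite Rabs_R0. assert (0 < powerRZ 2 p) by (apply powerRZ_lt; lra).
    unfold Rabs. destruct (Rcase_abs _); lra.
  - destruct (pow2_bracket r) as [p Hp]; [lra|].
    destruct (mk p) as [q [Hq _]].
    exists (exist _ (powerRZ 2 p) (ex_intro _ q (or_introl Hq))). simpl.
    rewrite (Rabs_right r) by lra. unfold Rabs. destruct (Rcase_abs _); lra.
Qed.

Lemma prim_run_S P Sy pih z xsec t :
  prim_run P Sy pih z xsec (S t) =
  (fst (prim_run P Sy pih z xsec t) ++
     [pih (fst (prim_run P Sy pih z xsec t)) (map (obs P) (snd (prim_run P Sy pih z xsec t)))
          (map xsec (seq 0 (S (ell z t))))],
   snd (prim_run P Sy pih z xsec t) ++
     [trans P (last (snd (prim_run P Sy pih z xsec t)) (init P))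
       (pih (fst (prim_run P Sy pih z xsec t)) (map (obs P) (snd (prim_run P Sy pih z xsec t)))
          (map xsec (seq 0 (S (ell z t)))))]).
Proof. simpl. destruct (prim_run P Sy pih z xsec t); reflexivity. Qed.

Lemma prim_run_len P Sy pih z xsec t :
  length (snd (prim_run P Sy pih z xsec t)) = S t /\ length (fst (prim_run P Sy pih z xsec t)) = t.
Proof.
  induction t; [simpl; auto|]. rewrite prim_run_S. simpl. rewrite !length_app. simpl. lia.
Qed.

Lemma prim_state_last P Sy pih z xsec t :
  prim_state P Sy pih z xsec t = last (snd (prim_run P Sy pih z xsec t)) (init P).
Proof.
  destruct t; [reflexivity|]. unfold prim_state. rewrite prim_run_S. simpl snd.
  rewrite last_last. rewrite app_nth2; destruct (prim_run_len P Sy pih z xsec t) as [L _]; rewrite L; [|lia].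
  rewrite Nat.sub_diag. reflexivity.
Qed.

Lemma sec_run_S Sy pi k :
  sec_run Sy pi (S k) =
  (fst (sec_run Sy pi k) ++ [pi (fst (sec_run Sy pi k)) (map (obs Sy) (snd (sec_run Sy pi k)))],
   snd (sec_run Sy pi k) ++ [trans Sy (last (snd (sec_run Sy pi k)) (init Sy))
        (pi (fst (sec_run Sy pi k)) (map (obs Sy) (snd (sec_run Sy pi k))))]).
Proof. simpl. destruct (sec_run Sy pi k); reflexivity. Qed.

Lemma sec_run_len Sy pi k : length (snd (sec_run Sy pi k)) = S k.
Proof. induction k; [reflexivity|]. rewrite sec_run_S. simpl. rewrite length_app. simpl. lia. Qed.

Lemma sec_state_last Sy pi k : sec_state Sy pi k = last (snd (sec_run Sy pi k)) (init Sy).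
Proof.
  destruct k; [reflexivity|]. unfold sec_state. rewrite sec_run_S. simpl snd.
  rewrite last_last. rewrite app_nth2; rewrite sec_run_len; [|lia].
  rewrite Nat.sub_diag. reflexivity.
Qed.

Lemma sec_state_S Sy pi k : exists u, sec_state Sy pi (S k) = trans Sy (sec_state Sy pi k) u.
Proof.
  rewrite !sec_state_last, sec_run_S. simpl snd. rewrite last_last. eexists; reflexivity.
Qed.

Lemma prim_state_S P Sy pih z xsec t :
  prim_state P Sy pih z xsec (S t) = trans P (prim_state P Sy pih z xsec t)
     (pih (fst (prim_run P Sy pih z xsec t)) (map (obs P) (snd (prim_run P Sy pih z xsec t)))
          (map xsec (seq 0 (S (ell z t))))).
Proof.
  rewrite !prim_state_last, prim_run_S. simpl snd. rewrite last_last. reflexivity.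
Qed.

Definition zz (l : nat) : nat := (l * (l + 8))%nat.

Lemma count_le n l : length (filter (fun j => Nat.leb j l) (seq 0 n)) = Nat.min n (S l).
Proof.
  induction n; [reflexivity|]. rewrite seq_S, filter_app, length_app, IHn. simpl.
  destruct (Nat.leb_spec n l); simpl; lia.
Qed.

Lemma ell_zz l t : (zz l <= t < zz (S l))%nat -> ell zz t = S l.
Proof.
  intros H. unfold ell.
  rewrite (filter_ext _ (fun j => Nat.leb j l)).
  - rewrite count_le. unfold zz in H. lia.
  - intros j. unfold zz in *. destruct (Nat.leb_spec (j * (j+8)) t), (Nat.leb_spec j l); auto; nia.
Qed.

Lemma zz_incr : strictly_increasing zz.
Proof. intros a b H. unfold zz. nia. Qed.

Definition sumacts (us : list binary_act) : R := fold_right (fun a acc => proj1_sig a + acc) 0 us.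

Lemma sumacts_app us u : sumacts (us ++ [u]) = sumacts us + proj1_sig u.
Proof. induction us; simpl; [ring|]. rewrite IHus. ring. Qed.

Lemma eta_pos t : 0 < / (256 * 2 ^ t).
Proof. apply Rinv_0_lt_compat. assert (0 < 2 ^ t) by (apply pow_lt; lra). lra. Qed.

Definition pih : ppolicy S_binary S_thirds := fun us ys xs =>
  proj1_sig (constructive_indefinite_description _
     (step_exists (last xs 0 - sumacts us) _ (eta_pos (length us)))).

Lemma pih_spec us ys xs :
  Rabs ((last xs 0 - sumacts us) - proj1_sig (pih us ys xs)) <=
  Rabs (last xs 0 - sumacts us) / 2 + / (256 * 2 ^ length us).
Proof. unfold pih. destruct (constructive_indefinite_description _ _) as [s Hs]. exact Hs. Qed.

Lemma last_map_seq (f : nat -> R) n : last (map f (seq 0 (S n))) 0 = f n.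
Proof. rewrite seq_S, map_app. simpl. apply last_last. Qed.

Section Main.
Variable pi : policy S_thirds.
Let X := sec_state S_thirds pi.
Let Y := prim_state S_binary S_thirds pih zz X.

Lemma sum_Y t : sumacts (fst (prim_run S_binary S_thirds pih zz X t)) = Y t.
Proof.
  induction t; [reflexivity|]. rewrite prim_run_S. cbn [fst].
  rewrite sumacts_app. unfold Y; rewrite prim_state_S. cbn [trans S_binary].
  unfold f_add_binary. f_equal. exact IHt.
Qed.

Lemma X_step k : Rabs (X (S k) - X k) <= 1/3.
Proof.
  destruct (sec_state_S S_thirds pi k) as [u Hu]. unfold X. rewrite Hu. simpl.
  unfold f_add_thirds. destruct u as [v Hv]; simpl.
  replace (sec_state S_thirds pi k + v - sec_state S_thirds pi k) with v by ring.
  unfold Rabs; destruct (Rcase_abs v); lra.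
Qed.

Lemma X_int k : exists n : Z, X k = IZR n / 3 /\ (Z.abs n <= Z.of_nat k)%Z.
Proof.
  induction k.
  - exists 0%Z. split; [unfold X, sec_state; simpl; lra| simpl; lia].
  - destruct IHk as [n [Hn Hb]].
    destruct (sec_state_S S_thirds pi k) as [u Hu]. unfold X in *. rewrite Hu. simpl.
    unfold f_add_thirds. destruct u as [v Hv]; simpl. rewrite Hn.
    destruct Hv as [->|[->| ->]].
    + exists (n - 1)%Z. rewrite minus_IZR. split; [lra|lia].
    + exists n. split; [lra|lia].
    + exists (n + 1)%Z. rewrite plus_IZR. split; [lra|lia].
Qed.

Lemma Y_step t l : (zz l <= t < zz (S l))%nat ->
  Rabs (X (S l) - Y (S t)) <= Rabs (X (S l) - Y t) / 2 + / (256 * 2 ^ l).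
Proof.
  intros H.
  assert (HY : Y (S t) = Y t + proj1_sig (pih (fst (prim_run S_binary S_thirds pih zz X t))
     (map (obs S_binary) (snd (prim_run S_binary S_thirds pih zz X t)))
     (map X (seq 0 (S (S l)))))).
  { unfold Y. rewrite prim_state_S, (ell_zz l t H). reflexivity. }
  pose proof (pih_spec (fst (prim_run S_binary S_thirds pih zz X t))
     (map (obs S_binary) (snd (prim_run S_binary S_thirds pih zz X t)))
     (map X (seq 0 (S (S l))))) as Hs.
  rewrite last_map_seq in Hs. 
  pose proof (sum_Y t) as HS. change (sumacts (fst (prim_run S_binary S_thirds pih zz X t)) = Y t) in HS.
  rewrite HS in Hs.
  destruct (prim_run_len S_binary S_thirds pih zz X t) as [_ L].
  change (@length binary_act (fst (prim_run S_binary S_thirds pih zz X t)) = t) in L. rewrite L in Hs.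
  rewrite HY.
  match goal with |- Rabs (?a - (?b + ?c)) <= _ => replace (a - (b + c)) with (a - b - c) by ring end.
  eapply Rle_trans; [exact Hs|]. apply Rplus_le_compat_l.
  apply Rinv_le_contravar. assert (0 < 2 ^ l) by (apply pow_lt; lra). lra.
  apply Rmult_le_compat_l; [lra|]. apply Rle_pow; [lra|]. unfold zz in H. nia.
Qed.

Lemma block l j : (j <= 2*l+9)%nat ->
  Rabs (X (S l) - Y (zz l + j)) <= Rabs (X (S l) - Y (zz l)) / 2^j + 2 * / (256 * 2^l).
Proof.
  assert (He : 0 < / (256 * 2^l)) by apply eta_pos.
  induction j; intros Hj.
  - rewrite Nat.add_0_r. simpl pow. unfold Rdiv. rewrite Rinv_1. lra.
  - replace (zz l + S j)%nat with (S (zz l + j)) by lia.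
    eapply Rle_trans; [apply Y_step; unfold zz; nia|].
    specialize (IHj ltac:(lia)).
    assert (E : Rabs (X (S l) - Y (zz l)) / 2 ^ S j = Rabs (X (S l) - Y (zz l)) / 2 ^ j / 2).
    { simpl pow. field. apply pow_nonzero. lra. }
    rewrite E. lra.
Qed.

Lemma invariant l : Rabs (X l - Y (zz l)) <= / (24 * 2^l).
Proof.
  induction l.
  - unfold X, Y, sec_state, prim_state. simpl. replace (0 - 0) with 0 by ring. rewrite Rabs_R0.
    left. apply Rinv_0_lt_compat. lra.
  - assert (P1 : 1 <= 2 ^ l) by (apply pow_R1_Rle; lra).
    assert (A1 : Rabs (X (S l) - Y (zz l)) <= 1/2).
    { replace (X (S l) - Y (zz l)) with ((X (S l) - X l) + (X l - Y (zz l))) by ring.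
      eapply Rle_trans; [apply Rabs_triang|]. pose proof (X_step l).
      assert (/ (24 * 2 ^ l) <= / 24). { apply Rinv_le_contravar; lra. } lra. }
    pose proof (block l (2*l+9) (Nat.le_refl _)) as B.
    replace (zz l + (2*l+9))%nat with (zz (S l)) in B by (unfold zz; nia).
    eapply Rle_trans; [exact B|].
    assert (Q : 2 ^ (2*l+9) = 2^l * 2^l * 512).
    { replace (2*l+9)%nat with (l + l + 9)%nat by lia. rewrite !pow_add. simpl. ring. }
    rewrite Q. set (P := 2^l) in *. set (A := Rabs (X (S l) - Y (zz l))) in *.
    assert (A0 : 0 <= A) by apply Rabs_pos.
    assert (H1 : A / (P * P * 512) <= 1/2 * / (512 * P)).
    { unfold Rdiv. apply Rmult_le_compat; try lra.
      - left. apply Rinv_0_lt_compat. nra.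
      - apply Rinv_le_contravar; nra. }
    simpl pow. fold P.
    rewrite !Rinv_mult in *. 
    assert (0 < / P) by (apply Rinv_0_lt_compat; lra).
    lra.
Qed.
End Main.

Lemma sqz_rad q : 0 < 1 / (4 * 2 ^ q) <= 1/4.
Proof.
  pose proof (pow_R1_Rle 2 q ltac:(lra)). unfold Rdiv. rewrite !Rmult_1_l. split.
  - apply Rinv_0_lt_compat; lra.
  - apply Rinv_le_contravar; lra.
Qed.

Lemma h_val n k w : (Z.abs n <= Z.of_nat k)%Z -> Rabs (w - IZR n / 3) <= / (24 * 2 ^ k) ->
  h_sqz w = if (0 <=? n)%Z then Some (Z.to_nat n) else None.
Proof.
  intros Hn Hw.
  assert (P1 : 1 <= 2 ^ k) by (apply pow_R1_Rle; lra).
  assert (Hw' : Rabs (w - IZR n / 3) <= / 24).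
  { eapply Rle_trans; [exact Hw|]. apply Rinv_le_contravar; lra. }
  assert (key : forall q, sqz_prop w q -> Z.of_nat q = n).
  { intros q [Hq1 Hq2]. pose proof (sqz_rad q).
    rewrite INR_IZR_INZ in Hq1, Hq2.
    assert (Hb : -1 < IZR (n - Z.of_nat q) < 1).
    { rewrite minus_IZR. revert Hw'. unfold Rabs. destruct (Rcase_abs _); intros; lra. }
    destruct Hb as [Hb1 Hb2]. apply lt_IZR in Hb1. apply lt_IZR in Hb2. lia. }
  unfold h_sqz. destruct (excluded_middle_informative _) as [H|H].
  - destruct (constructive_indefinite_description _ H) as [q Hq]. simpl.
    apply key in Hq. subst n. destruct (Z.leb_spec 0 (Z.of_nat q)); [|lia].
    rewrite Znat.Nat2Z.id. reflexivity.
  - destruct (Z.leb_spec 0 n); [|reflexivity]. exfalso. apply H.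
    exists (Z.to_nat n). unfold sqz_prop. rewrite INR_IZR_INZ, Znat.Z2Nat.id by lia.
    assert (/ (24 * 2 ^ k) <= 1 / (4 * 2 ^ Z.to_nat n)).
    { unfold Rdiv. rewrite Rmult_1_l. apply Rinv_le_contravar.
      - pose proof (pow_R1_Rle 2 (Z.to_nat n) ltac:(lra)). lra.
      - assert (2 ^ Z.to_nat n <= 2 ^ k) by (apply Rle_pow; lra || lia). lra. }
    revert Hw. unfold Rabs. destruct (Rcase_abs _); intros; lra.
Qed.

Theorem lemma1 : one_illusion S_binary S_thirds obs_eq.
Proof.
  exists pih, zz. split; [apply zz_incr|]. intros pi k. change (h_sqz (sec_state S_thirds pi k) = h_sqz (prim_state S_binary S_thirds pih zz (sec_state S_thirds pi) (zz k))).
  destruct (X_int pi k) as [n [Hn Hb]].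
  pose proof (invariant pi k) as Hi.
  rewrite (h_val n k (sec_state S_thirds pi k)) by (exact Hb || rewrite Hn; replace (IZR n / 3 - IZR n / 3) with 0 by ring; rewrite Rabs_R0; left; apply Rinv_0_lt_compat; pose proof (pow_lt 2 k); lra).
  rewrite (h_val n k (prim_state S_binary S_thirds pih zz (sec_state S_thirds pi) (zz k))); [reflexivity|exact Hb|].
  rewrite <- Hn. rewrite Rabs_minus_sym. exact Hi.
Qed.
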